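(* Let $t\ge0$, $R>1$, and let $h$ be a minimizer of $E$ over $\mathcal A_h$ satisfying $h(r)\ge\frac23$ for all $r\in[1,R]$. Then for every $x$ with $1\le|x|\le R$ (where the frame $(\mathbf n,\mathbf m,\mathbf p)$ is defined) and every $\mathbf W\in S_0$, \[ \psi(\mathbf W)+\frac{3h(|x|)}{8}\left(2\,\mathbf E_0\cdot\mathbf W+|\mathbf W|^2\right)^2\ge0, \] where $\mathbf E_0=\sqrt{3/2}\,(\hat x\otimes\hat x-\mathbf I/3)$.
   Context: $S_0$: real symmetric traceless $3\times3$ matrices; $\mathbf A\cdot\mathbf B=A_{ij}B_{ij}$, $|\mathbf W|^2=\mathbf W\cdot\mathbf W$. $h_+=\frac{3+\sqrt{9+8t}}{4}$; $E[h]=\int_1^R\frac{r^2}{2}(h')^2+3h^2+r^2[\frac t8(1-h^2)^2+\frac{h_+}{8}(1+3h^4-4h^3)]dr$ on $\mathcal A_h=\{h\in L^2(1,R): h'\in L^2((1,R);r^2dr),\ h(1)=h(R)=1\}$. For $x$ with spherical coordinates $(r,\theta,\phi)$: $\mathbf n=\hat x=(\sin\theta\cos\phi,\sin\theta\sin\phi,\cos\theta)$, $\mathbf m=(\cos\theta\cos\phi,\cos\theta\sin\phi,-\sin\theta)$, $\mathbf p=(-\sin\phi,\cos\phi,0)$. Put $\mathbf E=\mathbf n\otimes\mathbf n-\mathbf I/3$, $\mathbf F=\mathbf n\otimes\mathbf m+\mathbf m\otimes\mathbf n$, $\mathbf G=\mathbf n\otimes\mathbf p+\mathbf p\otimes\mathbf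 n$, $\mathbf X=\mathbf m\otimes\mathbf p+\mathbf p\otimes\mathbf m$, $\mathbf Y=\mathbf m\otimes\mathbf m-\mathbf p\otimes\mathbf p$, and write $\mathbf W=w_0\mathbf E+w_1\mathbf F+w_2\mathbf G+w_3\mathbf X+w_4\mathbf Y$. Define $\psi(\mathbf W)=-\frac{\sqrt6}{2}\mathrm{tr}\,\mathbf W^3-\frac12w_0^2+\frac92w_3^2+\frac92w_4^2$. *)

(* Defs.v *)
From HB Require Import structures.
From mathcomp Require Import all_boot all_order all_algebra.
From mathcomp Require Import all_classical all_reals all_analysis.
Set Implicit Arguments. Unset Strict Implicit. Unset Printing Implicit Defensive.
Import Order.TTheory GRing.Theory Num.Theory.
Import numFieldNormedType.Exports.
Local Open Scope classical_set_scope.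
Local Open Scope ring_scope.

Section Defs.
Variable R : realType.

Definition mdot (A B : 'M[R]_3) : R := \sum_(i < 3) \sum_(j < 3) A i j * B i j.

Definition S0 : set 'M[R]_3 := [set A | A^T = A /\ \tr A = 0].

Definition tens (u v : 'rV[R]_3) : 'M[R]_3 := u^T *m v.

Definition vec3 (a b c : R) : 'rV[R]_3 :=
  \row_(i < 3) (if i == 0 :> nat then a else if i == 1 :> nat then b else c).

Definition nvec (th ph : R) := vec3 (sin th * cos ph) (sin th * sin ph) (cos th).
Definition mvec (th ph : R) := vec3 (cos th * cos ph) (cos th * sin ph) (- sin th).
Definition pvec (th ph : R) := vec3 (- sin ph) (cos ph) 0.

Definition Emat th ph : 'M[R]_3 := tens (nvec th ph) (nvec th ph) - 3^-1 *: 1%:M.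
Definition Fmat th ph : 'M[R]_3 := tens (nvec th ph) (mvec th ph) + tens (mvec th ph) (nvec th ph).
Definition Gmat th ph : 'M[R]_3 := tens (nvec th ph) (pvec th ph) + tens (pvec th ph) (nvec th ph).
Definition Xmat th ph : 'M[R]_3 := tens (mvec th ph) (pvec th ph) + tens (pvec th ph) (mvec th ph).
Definition Ymat th ph : 'M[R]_3 := tens (mvec th ph) (mvec th ph) - tens (pvec th ph) (pvec th ph).

Definition frame_comb th ph (w0 w1 w2 w3 w4 : R) : 'M[R]_3 :=
  w0 *: Emat th ph + w1 *: Fmat th ph + w2 *: Gmat th ph
  + w3 *: Xmat th ph + w4 *: Ymat th ph.

Definition psi (W : 'M[R]_3) (w0 w3 w4 : R) : R :=
  - (Num.sqrt 6 / 2) * \tr (W *m W *m W) - w0 ^+ 2 / 2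
  + 9 / 2 * w3 ^+ 2 + 9 / 2 * w4 ^+ 2.

Definition E0mat th ph : 'M[R]_3 := Num.sqrt (3 / 2) *: Emat th ph.

Definition hplus (t : R) : R := (3 + Num.sqrt (9 + 8 * t)) / 4.

Local Notation mu := (@lebesgue_measure R).

Definition energy_density (t : R) (h dh : R -> R) (r : R) : R :=
  r ^+ 2 / 2 * dh r ^+ 2 + 3 * h r ^+ 2
  + r ^+ 2 * (t / 8 * (1 - h r ^+ 2) ^+ 2
              + hplus t / 8 * (1 + 3 * h r ^+ 4 - 4 * h r ^+ 3)).

Definition energy (t Rb : R) (h dh : R -> R) : \bar R :=
  (\int[mu]_(r in `[1%R, Rb]) (energy_density t h dh r)%:E)%E.

(* h in A_h with weak derivative dh: h in L^2(1,Rb), dh in L^2((1,Rb); r^2 dr),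
   h the (absolutely) continuous representative h(x) = h(1) + int_1^x dh,
   boundary conditions h(1) = h(Rb) = 1. *)
Definition primitive_rep (Rb : R) (h dh : R -> R) : Prop :=
  forall x : R, 1 <= x <= Rb ->
    (\int[mu]_(r in `[1%R, x]) (dh r)%:E)%E = ((h x - h 1)%:E)%E.

Definition admissible (Rb : R) (h dh : R -> R) : Prop :=
  [/\ measurable_fun `[1%R, Rb] h /\ measurable_fun `[1%R, Rb] dh,
      (\int[mu]_(r in `[1%R, Rb]) (h r ^+ 2)%:E < +oo)%E,
      (\int[mu]_(r in `[1%R, Rb]) (r ^+ 2 * dh r ^+ 2)%:E < +oo)%E,
      integrable mu `[1%R, Rb] (EFin \o dh)
    & primitive_rep Rb h dh /\ (h 1 = 1 /\ h Rb = 1)].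

Definition is_minimizer (t Rb : R) (h : R -> R) : Prop :=
  exists dh, admissible Rb h dh /\
    forall g dg, admissible Rb g dg -> (energy t Rb h dh <= energy t Rb g dg)%E.

End Defs.

(* Main.v *)
Require Import Defs.
From HB Require Import structures.
From mathcomp Require Import all_boot all_order all_algebra.
From mathcomp Require Import all_classical all_reals all_analysis.
From mathcomp Require Import ring lra.
Import Order.TTheory GRing.Theory Num.Theory.
Import numFieldNormedType.Exports.
Local Open Scope ring_scope.

Section Sc.
Variable R : rcfType.

Definition ent (x y d e f : R) (i j : nat) : R :=
  match i, j with
  | 0, 0 => x | 1, 1 => y | 2, 2 => - x - y
  | 0, 1 | 1, 0 => d | 0, 2 | 2, 0 => e | _, _ => f end.
Definition ent2 x y d e f i j :=
  ent x y d e f i 0 * ent x y d e f 0 j + ent x y d e f i 1 * ent x y d e f 1 j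
  + ent x y d e f i 2 * ent x y d e f 2 j.
Definition tr3 x y d e f :=
  \sum_(i < 3) \sum_(k < 3) ent2 x y d e f i k * ent x y d e f k i.
Definition nrm x y d e f := \sum_(i < 3) \sum_(k < 3) ent x y d e f i k ^+ 2.
Definition det3 (a b c d e f g h i : R) :=
  a*(e*i - f*h) - b*(d*i - f*g) + c*(d*h - e*g).
Definition mnr x y d e f (c1 c2 c3 : nat * nat) :=
  let r c := (if c.1 == c.2 then 1 else 0, ent x y d e f c.1 c.2, ent2 x y d e f c.1 c.2) in
  det3 (r c1).1.1 (r c1).1.2 (r c1).2 (r c2).1.1 (r c2).1.2 (r c2).2
       (r c3).1.1 (r c3).1.2 (r c3).2.

Lemma disc x y d e f :
  6 * tr3 x y d e f ^+ 2 <= nrm x y d e f ^+ 3.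
Proof.
pose m := mnr x y d e f.
have H : nrm x y d e f ^+ 3 - 6 * tr3 x y d e f ^+ 2 =
  2 * (m (0,0)%N (1,1)%N (2,2)%N ^+ 2
  + 2 * (m (0,0)%N (1,1)%N (0,1)%N ^+ 2 + m (0,0)%N (1,1)%N (0,2)%N ^+ 2 + m (0,0)%N (1,1)%N (1,2)%N ^+ 2
        + m (0,0)%N (2,2)%N (0,1)%N ^+ 2 + m (0,0)%N (2,2)%N (0,2)%N ^+ 2 + m (0,0)%N (2,2)%N (1,2)%N ^+ 2
        + m (1,1)%N (2,2)%N (0,1)%N ^+ 2 + m (1,1)%N (2,2)%N (0,2)%N ^+ 2 + m (1,1)%N (2,2)%N (1,2)%N ^+ 2)
  + 4 * (m (0,0)%N (0,1)%N (0,2)%N ^+ 2 + m (0,0)%N (0,1)%N (1,2)%N ^+ 2 + m (0,0)%N (0,2)%N (1,2)%N ^+ 2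
        + m (1,1)%N (0,1)%N (0,2)%N ^+ 2 + m (1,1)%N (0,1)%N (1,2)%N ^+ 2 + m (1,1)%N (0,2)%N (1,2)%N ^+ 2
        + m (2,2)%N (0,1)%N (0,2)%N ^+ 2 + m (2,2)%N (0,1)%N (1,2)%N ^+ 2 + m (2,2)%N (0,2)%N (1,2)%N ^+ 2)).
  rewrite /m /mnr /det3 /tr3 /nrm !big_ord_recr !big_ord0 /= /ent2 /ent /=.
  clear m. ring.
rewrite -subr_ge0 H.
by repeat (exact: sqr_ge0 || apply: addr_ge0 || apply: mulr_ge0 || done).
Qed.

Lemma gnonneg (s T N : R) : s ^+ 2 = 6 -> 0 <= s -> 0 <= N ->
  6 * T ^+ 2 <= N ^+ 3 -> 0 <= - (s / 2) * T + N ^+ 2 / 4 + N / 4.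
Proof.
move=> hs s0 N0 hd.
pose r := Num.sqrt N.
have r0 : 0 <= r by apply: sqrtr_ge0.
have rN : r ^+ 2 = N by rewrite sqr_sqrtr.
have hT : s * T <= r ^+ 3.
  have h1 : (s * T) ^+ 2 <= (r ^+ 3) ^+ 2.
    have -> : (r ^+ 3) ^+ 2 = N ^+ 3 by rewrite -exprM mulnC exprM rN.
    by rewrite exprMn hs.
  have h2 : s * T <= `|s * T| by apply: ler_norm.
  apply: (le_trans h2).
  rewrite -ler_sqr ?nnegrE ?normr_ge0 ?exprn_ge0 //.
  by rewrite real_normK ?num_real.
have e : - (s / 2) * T + N ^+ 2 / 4 + N / 4 =
   (r ^+ 3 - s * T) / 2 + (r * (r - 1)) ^+ 2 / 4.
  by rewrite -rN; field.
rewrite e; apply: addr_ge0; apply: mulr_ge0; rewrite ?subr_ge0 ?sqr_ge0 //. all: by rewrite invr_ge0.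
Qed.

Lemma nrm_ge0 x y d e f : 0 <= nrm x y d e f.
Proof.
rewrite /nrm; apply: sumr_ge0 => i _; apply: sumr_ge0 => j _; exact: sqr_ge0.
Qed.

Lemma scal (s w0 w1 w2 w3 w4 k : R) : s ^+ 2 = 6 -> 0 <= s -> 1 / 4 <= k ->
  0 <= - (s / 2) * tr3 (2 * w0 / 3) (- (w0 / 3) + w4) w1 w2 w3 - w0 ^+ 2 / 2
     + 9 / 2 * w3 ^+ 2 + 9 / 2 * w4 ^+ 2
     + k * (2 * (s / 2 * (2 * w0 / 3)) + nrm (2 * w0 / 3) (- (w0 / 3) + w4) w1 w2 w3) ^+ 2.
Proof.
move=> hs s0 hk.
set X := (2 * _ + _) ^+ 2.
have X0 : 0 <= X by apply: sqr_ge0.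
pose x := s / 3 + 2 * w0 / 3.
pose y := - (s / 6) - w0 / 3 + w4.
have G := gnonneg s (tr3 x y w1 w2 w3) (nrm x y w1 w2 w3) hs s0 (nrm_ge0 x y w1 w2 w3) (disc x y w1 w2 w3).
pose P := 2/3 * w4 ^+ 2 + 2/3 * w3 ^+ 2 - 1/12 * w2 ^+ 2 - 1/12 * w1 ^+ 2
   - 1/9 * w0 ^+ 2 - 1/36 * s * w0 - 1/144 * s ^+ 2.
have HE : - (s / 2) * tr3 (2 * w0 / 3) (- (w0 / 3) + w4) w1 w2 w3 - w0 ^+ 2 / 2
     + 9 / 2 * w3 ^+ 2 + 9 / 2 * w4 ^+ 2 + 1 / 4 * X =
    - (s / 2) * tr3 x y w1 w2 w3 + nrm x y w1 w2 w3 ^+ 2 / 4 + nrm x y w1 w2 w3 / 4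
    - (s ^+ 2 - 6) * P.
  rewrite /X /x /y /P /tr3 /nrm !big_ord_recr !big_ord0 /= /ent2 /ent /=.
  by field.
rewrite hs subrr mul0r subr0 in HE.
have : 0 <= - (s / 2) * tr3 (2 * w0 / 3) (- (w0 / 3) + w4) w1 w2 w3 - w0 ^+ 2 / 2
     + 9 / 2 * w3 ^+ 2 + 9 / 2 * w4 ^+ 2 + 1 / 4 * X by rewrite HE.
move=> H; apply: (le_trans H); rewrite lerD2l; apply: ler_wpM2r => //.
Qed.
End Sc.
Arguments ent {R}. Arguments ent2 {R}. Arguments tr3 {R}. Arguments nrm {R}.
Arguments scal {R}.

Section G.
Variable R : realType.
Variables th ph : R.

Definition Pm : 'M[R]_3 := \matrix_(i < 3, j < 3)
  (if i == 0 :> nat then nvec th ph 0 j else if i == 1 :> nat then mvec th ph 0 j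
   else pvec th ph 0 j).

Lemma rowPn : nvec th ph = row 0 Pm.
Proof. by apply/rowP => j; rewrite !mxE /=. Qed.
Lemma rowPm : mvec th ph = row 1 Pm.
Proof. by apply/rowP => j; rewrite !mxE /=. Qed.
Lemma rowPp : pvec th ph = row 2%:R Pm.
Proof. by apply/rowP => j; rewrite !mxE /=. Qed.

Lemma tensP a b : tens (row a Pm) (row b Pm) = Pm^T *m delta_mx a b *m Pm.
Proof.
rewrite /tens !rowE trmx_mul trmx_delta -!mulmxA (mulmxA (delta_mx a 0)).
by rewrite mul_delta_mx.
Qed.

Lemma eq_by (a b e K : R) : e = 0 -> a - b = e * K -> a = b.
Proof. by move=> -> h; apply/eqP; rewrite -subr_eq0 h mul0r. Qed.

Lemma PPt : Pm *m Pm^T = 1%:M.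
Proof.
have h1 := cos2Dsin2 th; have h2 := cos2Dsin2 ph.
apply/matrixP => i j; rewrite !mxE !big_ord_recr big_ord0 /= !mxE.
case: i => [[|[|[|//]]] ?]; case: j => [[|[|[|//]]] ?] /=.
all: try nra.
all: apply: (@eq_by _ _ (cos ph ^+ 2 + sin ph ^+ 2 - 1) (sin th * cos th));
  [by rewrite h2 subrr | ring].
Qed.

Lemma PtP : Pm^T *m Pm = 1%:M.
Proof. exact: mulmx1C PPt. Qed.

Lemma conjM (A B : 'M[R]_3) :
  (Pm^T *m A *m Pm) *m (Pm^T *m B *m Pm) = Pm^T *m (A *m B) *m Pm.
Proof. by rewrite !mulmxA -(mulmxA (Pm^T *m A)) PPt mulmx1. Qed.

Lemma conjtr (A : 'M[R]_3) : \tr (Pm^T *m A *m Pm) = \tr A.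
Proof. by rewrite mxtrace_mulC mulmxA PPt mul1mx. Qed.

Lemma conjT (A : 'M[R]_3) : (Pm^T *m A *m Pm)^T = Pm^T *m A^T *m Pm.
Proof. by rewrite !trmx_mul trmxK mulmxA. Qed.

End G.
Arguments Pm {R}. Arguments rowPn {R}. Arguments rowPm {R}. Arguments rowPp {R}. Arguments tensP {R}. Arguments PPt {R}. Arguments PtP {R}. Arguments conjM {R}. Arguments conjtr {R}. Arguments conjT {R}.

Lemma mdotE (R : realType) (A B : 'M[R]_3) : mdot A B = \tr (A *m B^T).
Proof.
rewrite /mdot /mxtrace; apply: eq_bigr => i _; rewrite mxE.
by apply: eq_bigr => j _; rewrite mxE.
Qed.


Section F.
Variable R : realType.
Variables th ph : R.

Definition Mf (w0 w1 w2 w3 w4 : R) : 'M[R]_3 :=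
  \matrix_(i < 3, j < 3) @ent R (2 * w0 / 3) (- (w0 / 3) + w4) w1 w2 w3 i j.

Lemma Mf_comb w0 w1 w2 w3 w4 : Mf w0 w1 w2 w3 w4 =
  w0 *: (delta_mx 0 0 - 3^-1 *: 1%:M) + w1 *: (delta_mx 0 1 + delta_mx 1 0)
  + w2 *: (delta_mx 0 2%:R + delta_mx 2%:R 0) + w3 *: (delta_mx 1 2%:R + delta_mx 2%:R 1)
  + w4 *: (delta_mx 1 1 - delta_mx 2%:R 2%:R).
Proof.
apply/matrixP => i j; rewrite !mxE.
case: i => [[|[|[|//]]] ?]; case: j => [[|[|[|//]]] ?] /=.
all: by field.
Qed.

Lemma clD (A B : 'M[R]_3) : (Pm th ph)^T *m (A + B) *m Pm th ph =
  (Pm th ph)^T *m A *m Pm th ph + (Pm th ph)^T *m B *m Pm th ph.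
Proof. by rewrite mulmxDr mulmxDl. Qed.
Lemma clB (A B : 'M[R]_3) : (Pm th ph)^T *m (A - B) *m Pm th ph =
  (Pm th ph)^T *m A *m Pm th ph - (Pm th ph)^T *m B *m Pm th ph.
Proof. by rewrite mulmxBr mulmxBl. Qed.
Lemma clZ a (A : 'M[R]_3) : (Pm th ph)^T *m (a *: A) *m Pm th ph =
  a *: ((Pm th ph)^T *m A *m Pm th ph).
Proof. by rewrite -scalemxAr -scalemxAl. Qed.

Lemma frameP w0 w1 w2 w3 w4 :
  frame_comb th ph w0 w1 w2 w3 w4 = (Pm th ph)^T *m Mf w0 w1 w2 w3 w4 *m Pm th ph.
Proof.
rewrite Mf_comb /frame_comb /Emat /Fmat /Gmat /Xmat /Ymat.
rewrite (rowPn th ph) (rowPm th ph) (rowPp th ph) !tensP.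
by rewrite !clD !clZ !clB !clD clZ mulmx1 PtP.
Qed.

Lemma trMf3 w0 w1 w2 w3 w4 : let M := Mf w0 w1 w2 w3 w4 in
  \tr (M *m M *m M) = tr3 (2 * w0 / 3) (- (w0 / 3) + w4) w1 w2 w3.
Proof.
rewrite /= /mxtrace /tr3; apply: eq_bigr => i _; rewrite mxE; apply: eq_bigr => k _.
rewrite !mxE /ent2 !big_ord_recr big_ord0 /= !mxE add0r.
by [].
Qed.

Lemma mdMf w0 w1 w2 w3 w4 : let M := Mf w0 w1 w2 w3 w4 in
  mdot M M = nrm (2 * w0 / 3) (- (w0 / 3) + w4) w1 w2 w3.
Proof.
rewrite /= /mdot /nrm; apply: eq_bigr => i _; apply: eq_bigr => k _.
by rewrite !mxE expr2.
Qed.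

Lemma mdE w0 w1 w2 w3 w4 : mdot (Mf 1 0 0 0 0) (Mf w0 w1 w2 w3 w4) = 2 * w0 / 3.
Proof.
rewrite /mdot !big_ord_recr !big_ord0 /= !mxE /=.
by field.
Qed.

End F.

Arguments Mf {R}.

Local Open Scope classical_set_scope.
Local Open Scope ring_scope.

Theorem lemma4p2 (R : realType) (t Rb : R) (h : R -> R) :
  0 <= t -> 1 < Rb ->
  is_minimizer t Rb h ->
  (forall r, 1 <= r <= Rb -> 2 / 3 <= h r) ->
  forall r th ph : R, 1 <= r <= Rb -> 0 < th < pi -> 0 <= ph < 2 * pi ->
  forall (W : 'M[R]_3) (w0 w1 w2 w3 w4 : R),
    S0 W ->
    W = frame_comb th ph w0 w1 w2 w3 w4 ->
    0 <= psi W w0 w3 w4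
         + 3 * h r / 8 * (2 * mdot (E0mat th ph) W + mdot W W) ^+ 2.
Proof.
move=> _ _ _ hh r th ph hr _ _ W w0 w1 w2 w3 w4 _ ->.
have hk : 1 / 4 <= 3 * h r / 8 by have := hh r hr; lra.
have hE : Emat th ph = (Pm th ph)^T *m Mf 1 0 0 0 0 *m Pm th ph.
  by rewrite -frameP /frame_comb scale1r !scale0r !addr0.
have s0 : 0 <= Num.sqrt 6 :> R by apply: sqrtr_ge0.
have hs : Num.sqrt 6 ^+ 2 = 6 :> R by rewrite sqr_sqrtr.
have h32 : Num.sqrt (3 / 2) = Num.sqrt 6 / 2 :> R.
  have -> : 3 / 2 = (Num.sqrt 6 / 2) ^+ 2 :> R by rewrite expr_div_n hs; field.
  by rewrite sqrtr_sqr ger0_norm // divr_ge0.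
rewrite /psi /E0mat hE h32 frameP !conjM conjtr trMf3.
rewrite !mdotE -scalemxAl mxtraceZ !conjT !conjM !conjtr -!mdotE mdE mdMf.
exact: scal.
Qed.
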